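(* Let $B\in\mathbb{R}^{r\times q}$ have orthonormal rows, with columns $b_1,\dots,b_q$, and let $\hat c_{ik}\in\{-1,+1\}$ be arbitrary signs. Let $\hat U\in\mathbb{R}^{n\times r}$ be a minimizer of $$\tilde U\mapsto\sum_{k=1}^q\sum_{i=1}^m\big(\hat c_{ik}y_{ik}-a_{ik}'\tilde U b_k\big)^2,$$ and let $\hat U = U^+R_U$ be a QR decomposition with $U^+\in\mathbb{R}^{n\times r}$ having orthonormal columns. Define, for $W\in\mathbb{R}^{n\times r}$, $$\mathrm{Term1}(W)=\sum_{i,k}b_k'W'a_{ik}a_{ik}'U^*(\tilde B^*B'b_k-\tilde b_k^* ),\quad \mathrm{Term2}(W)=\sum_{i,k}(c_{ik}\hat c_{ik}-1)(a_{ik}'Wb_k)(a_{ik}'x_k^* ),$$ $$\mathrm{Term3}(W)=\sum_{i,k}(a_{ik}'Wb_k)^2,$$ let $\mathcal{S}_W=\{W\in\mathbb{R}^{n\times r}:\|W\|_F=1\}$, and $$\mathrm{MainTerm}=\frac{\max_{W\in\mathcal{S}_W}|\mathrm{Term1}(W)|+\max_{W\in\mathcal{S}_W}|\mathrm{Term2}(W)|}{\min_{W\in\mathcal{S}_W}\mathrm{Term3}(W)}.$$ Assume $\min_{W\in\mathcal{S}_W}\mathrm{Term3}(W)>0$ (so the minimizer $\hat U$ is unique) and $\sigma_{\min}(U^*\Sigma^*B^*B')>\mathrm{MainTerm}$. Then $$\mathrm{SE}(U^+,U^* )\le\frac{\mathrm{MainTerm}}{\sigma_{\min}(U^*\Si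gma^*B^*B')-\mathrm{MainTerm}}.$$
   Context: $X^*=[x_1^*,\dots,x_q^*]\in\mathbb{R}^{n\times q}$ has rank $r$ with reduced SVD $X^*=U^*\Sigma^*B^*$, where $U^*\in\mathbb{R}^{n\times r}$ has orthonormal columns, $\Sigma^*\in\mathbb{R}^{r\times r}$ is diagonal positive, $B^*\in\mathbb{R}^{r\times q}$ has orthonormal rows; $\tilde B^*=\Sigma^*B^*$ with columns $\tilde b_k^*$, so $x_k^*=U^*\tilde b_k^*$. The vectors $a_{ik}\in\mathbb{R}^n$ ($i\in[m],k\in[q]$) are arbitrary (deterministic), $y_{ik}=|a_{ik}'x_k^*|$, and $c_{ik}\in\{-1,+1\}$ is the sign of $a_{ik}'x_k^*$ (any choice if it is zero), so $y_{ik}=c_{ik}a_{ik}'x_k^*$. $\sigma_{\min}(\cdot)$ is the $r$-th (smallest of the top $r$) singular value of an $n\times r$ matrix. For matrices $U_1,U_2$ with orthonormal columns, $\mathrm{SE}(U_1,U_2)=\|(I-U_1U_1')U_2\|$. *)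

(* Defs.v *)
From HB Require Import structures.
From mathcomp Require Import all_boot all_order all_algebra.
Set Implicit Arguments. Unset Strict Implicit. Unset Printing Implicit Defensive.
Import Order.TTheory GRing.Theory Num.Theory.
Local Open Scope ring_scope.

Definition dotv (R : pzRingType) (n : nat) (u v : 'cV[R]_n) : R :=
  \sum_(i < n) u i 0 * v i 0.

Definition vnorm (R : rcfType) (n : nat) (v : 'cV[R]_n) : R :=
  Num.sqrt (\sum_(i < n) v i 0 ^+ 2).

Definition frob (R : rcfType) (n p : nat) (W : 'M[R]_(n, p)) : R :=
  Num.sqrt (\sum_(i < n) \sum_(j < p) W i j ^+ 2).

Definition orthonormal_cols (R : pzRingType) (n p : nat) (U : 'M[R]_(n, p)) : Prop :=
  U^T *m U = 1%:M.
Definition orthonormal_rows (R : pzRingType) (n p : nat) (B : 'M[R]_(n, p)) : Prop :=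
  B *m B^T = 1%:M.

Definition is_max_on (T : Type) (R : numDomainType) (P : T -> Prop) (f : T -> R) (M : R) : Prop :=
  (exists2 x, P x & f x = M) /\ (forall x, P x -> f x <= M).
Definition is_min_on (T : Type) (R : numDomainType) (P : T -> Prop) (f : T -> R) (M : R) : Prop :=
  (exists2 x, P x & f x = M) /\ (forall x, P x -> M <= f x).

(* s is the r-th (smallest of the top r) singular value of the n x r matrix M:
   M = U diag(d) V' is a (thin) SVD with d nonnegative nonincreasing, and
   s is the last entry d_r. (Singular values are unique, so this determines s.) *)
Definition is_sigma_min (R : rcfType) (n r : nat) (M : 'M[R]_(n, r)) (s : R) : Prop :=
  exists (U : 'M[R]_(n, r)) (V : 'M[R]_r) (d : 'rV[R]_r),
    orthonormal_cols U /\ V^T *m V = 1%:M /\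
    (forall i, 0 <= d 0 i) /\
    (forall i j : 'I_r, (i <= j)%N -> d 0 j <= d 0 i) /\
    M = U *m diag_mx d *m V^T /\
    (exists2 i : 'I_r, val i = r.-1 & s = d 0 i).

Definition opnorm_le (R : rcfType) (n p : nat) (A : 'M[R]_(n, p)) (b : R) : Prop :=
  forall v : 'cV[R]_p, vnorm v = 1 -> vnorm (A *m v) <= b.

Definition SE_le (R : rcfType) (n r : nat) (U1 U2 : 'M[R]_(n, r)) (b : R) : Prop :=
  opnorm_le ((1%:M - U1 *m U1^T) *m U2) b.

(* Main.v *)
Require Import Defs.
From HB Require Import structures.
From mathcomp Require Import all_boot all_order all_algebra.
Import Order.TTheory GRing.Theory Num.Theory.
Local Open Scope ring_scope.
From mathcomp Require Import ring lra zify.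

Set Implicit Arguments. Unset Strict Implicit.
Section Helpers.
Variable R : rcfType.

Definition nsq (n : nat) (v : 'cV[R]_n) : R := \sum_(i < n) v i 0 ^+ 2.

Lemma nsq_ge0 n (v : 'cV[R]_n) : 0 <= nsq v.
Proof. by apply: sumr_ge0 => i _; apply: sqr_ge0. Qed.

Lemma nsqE n (v : 'cV[R]_n) : nsq v = (v^T *m v) 0 0.
Proof. by rewrite /nsq !mxE; apply: eq_bigr => i _; rewrite !mxE expr2. Qed.

Lemma nsqN n (v : 'cV[R]_n) : nsq (- v) = nsq v.
Proof. by apply: eq_bigr => i _; rewrite mxE sqrrN. Qed.

Lemma nsq0 n : nsq (0 : 'cV[R]_n) = 0.
Proof. by apply: big1 => i _; rewrite mxE expr0n. Qed.

Lemma nsq_eq0 n (v : 'cV[R]_n) : nsq v = 0 -> v = 0.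
Proof.
move=> h; apply/matrixP => i j; rewrite ord1 mxE.
have := psumr_eq0P (fun i _ => sqr_ge0 (v i 0)) h (i:=i) isT.
by move/eqP; rewrite sqrf_eq0 => /eqP.
Qed.

Lemma dotvE n (u v : 'cV[R]_n) : dotv u v = (u^T *m v) 0 0.
Proof. by rewrite /dotv !mxE; apply: eq_bigr => i _; rewrite !mxE. Qed.

Lemma dotvE' n (u v : 'cV[R]_n) : dotv u v = (v^T *m u) 0 0.
Proof. by rewrite /dotv !mxE; apply: eq_bigr => i _; rewrite !mxE mulrC. Qed.

Lemma dotv_lin n (u v w : 'cV[R]_n) s : dotv u (v + s *: w) = dotv u v + s * dotv u w.
Proof.
rewrite /dotv mulr_sumr -big_split /=; apply: eq_bigr => i _; rewrite !mxE; ring.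
Qed.

Lemma dotvZ n (u w : 'cV[R]_n) s : dotv u (s *: w) = s * dotv u w.
Proof. by rewrite -(add0r (s *: w)) dotv_lin /dotv big1 ?add0r // => i _; rewrite mxE mulr0. Qed.

Lemma dotvB n (u v w : 'cV[R]_n) : dotv u (v - w) = dotv u v - dotv u w.
Proof. by rewrite -scaleN1r dotv_lin mulN1r. Qed.

Lemma mx11_mul n (X : 'M[R]_(1,1)) (Y : 'M[R]_(1, n)) (j : 'I_n) : (X *m Y) 0 j = X 0 0 * Y 0 j.
Proof. by rewrite mxE big_ord1. Qed.

Lemma nsq_orth n p (U : 'M[R]_(n, p)) v : orthonormal_cols U -> nsq (U *m v) = nsq v.
Proof. by move=> H; rewrite !nsqE trmx_mul -mulmxA (mulmxA U^T) H mul1mx. Qed.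

Lemma nsq_proj n p (U : 'M[R]_(n, p)) x : orthonormal_cols U ->
  nsq ((1%:M - U *m U^T) *m x) <= nsq x.
Proof.
move=> H; set y := U^T *m x.
have -> : (1%:M - U *m U^T) *m x = x - U *m y by rewrite mulmxBl mul1mx mulmxA.
have key : (x - U *m y)^T *m (x - U *m y) = x^T *m x - y^T *m y.
  have e1 : x^T *m U = y^T by rewrite /y trmx_mul trmxK.
  have -> : (x - U *m y)^T = x^T - y^T *m U^T.
    by rewrite -trmx_mul; apply/matrixP => i j; rewrite !mxE.
  rewrite mulmxBl !mulmxBr -!mulmxA (mulmxA x^T) e1.
  by rewrite (mulmxA U^T U) H mul1mx -/y subrr subr0.
rewrite !nsqE key.
have -> : (x^T *m x - y^T *m y) 0 0 = (x^T *m x) 0 0 - (y^T *m y) 0 0 by rewrite !mxE.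
by rewrite gerBl -nsqE nsq_ge0.
Qed.

Lemma cauchy_schwarz p (u w : 'I_p -> R) :
  (\sum_j u j * w j) ^+ 2 <= (\sum_j u j ^+ 2) * (\sum_j w j ^+ 2).
Proof.
set A := \sum_j u j ^+ 2; set B := \sum_j u j * w j; set C := \sum_j w j ^+ 2.
have C0 : 0 <= C by apply: sumr_ge0 => j _; apply: sqr_ge0.
have A0 : 0 <= A by apply: sumr_ge0 => j _; apply: sqr_ge0.
have [Ceq|Cpos] := eqVneq C 0.
  have wz : forall j, w j = 0.
    move=> j; have := psumr_eq0P (fun j _ => sqr_ge0 (w j)) Ceq (i:=j) isT.
    by move/eqP; rewrite sqrf_eq0 => /eqP.
  rewrite /B big1 ?expr0n ?Ceq ?mulr0 // => j _; by rewrite wz mulr0.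
have Cp : 0 < C by rewrite lt_def Cpos C0.
set t := B / C.
have tC : t * C = B by rewrite /t divfK.
have h : 0 <= \sum_j (u j - t * w j) ^+ 2 by apply: sumr_ge0 => j _; apply: sqr_ge0.
have e : \sum_j (u j - t * w j) ^+ 2 = A + (- (2 * t)) * B + t ^+ 2 * C.
  rewrite /A /B /C !mulr_sumr -!big_split /=; apply: eq_bigr => j _; ring.
rewrite e in h.
have h2 : A - t * B >= 0.
  have : t ^+ 2 * C = t * B by rewrite -tC; ring.
  lra.
have : A * C - B ^+ 2 = C * (A - t * B) by rewrite -tC; ring.
have := mulr_ge0 C0 h2. lra.
Qed.

Lemma nsq_mul_le n p (E : 'M[R]_(n, p)) w :
  nsq (E *m w) <= (\sum_i \sum_j E i j ^+ 2) * nsq w.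
Proof.
rewrite /nsq mulr_suml; apply: ler_sum => i _; rewrite mxE.
exact: cauchy_schwarz (fun j => E i j) (fun j => w j 0).
Qed.

Lemma svd_lower n r (U0 : 'M[R]_(n, r)) (V : 'M[R]_r) (d : 'rV[R]_r) s w :
  orthonormal_cols U0 -> V^T *m V = 1%:M -> 0 <= s -> (forall i, s <= d 0 i) ->
  s ^+ 2 * nsq w <= nsq (U0 *m diag_mx d *m V^T *m w).
Proof.
move=> HU HV s0 hd.
have HVt : orthonormal_cols V^T by rewrite /orthonormal_cols trmxK; apply: mulmx1C.
rewrite -!mulmxA nsq_orth // -(nsq_orth w HVt).
set z := V^T *m w.
rewrite mul_diag_mx /nsq mulr_sumr; apply: ler_sum => i _; rewrite [X in _ <= X ^+ 2]mxE.
move: (z i 0) => zz.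
have hz := sqr_ge0 zz.
have h1 := hd i.
have h2 : 0 <= d 0 i - s by lra.
have h3 : 0 <= d 0 i + s by lra.
have := mulr_ge0 h2 h3. have := mulr_ge0 (mulr_ge0 h2 h3) hz. nra.
Qed.

Lemma quad_le (A F Q : R) : 0 <= Q -> (forall s, A - 2*F + Q <= A - 2*s*F + s^+2*Q) -> Q <= F.
Proof.
move=> Q0 H.
have [Qe|Qn] := eqVneq Q 0.
  have := H 0; rewrite Qe; lra.
have Qp : 0 < Q by rewrite lt_def Qn Q0.
set s := F / Q.
have sQ : s * Q = F by rewrite /s divfK.
have := H s => {}H.
have h1 : Q - 2*F + s*F <= 0.
  have : s^+2*Q = s*F by rewrite -sQ; ring.
  lra.
have h2 : Q * (Q - 2*F + s*F) <= 0.
  rewrite mulr_ge0_le0 //; lra.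
have h3 : (Q - F)^+2 <= 0.
  have -> : (Q - F)^+2 = Q * (Q - 2*F + s*F) by rewrite -sQ; ring.
  done.
have : Q - F = 0 by apply/eqP; rewrite -sqrf_eq0 eq_le h3 sqr_ge0.
lra.
Qed.

Lemma sum_lin3 (I : finType) (F G H : I -> R) a b :
  \sum_i (F i + a * G i + b * H i) = \sum_i F i + a * \sum_i G i + b * \sum_i H i.
Proof. by rewrite !big_split /= -!mulr_sumr. Qed.

Lemma dsum_quad (I J : finType) (f e : I -> J -> R) s :
  \sum_i \sum_j (f i j - s * e i j) ^+ 2 =
  \sum_i \sum_j f i j ^+ 2 + (- (2 * s)) * (\sum_i \sum_j f i j * e i j)
   + s ^+ 2 * \sum_i \sum_j e i j ^+ 2.
Proof.
rewrite -sum_lin3; apply: eq_bigr => i _; rewrite -sum_lin3.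
by apply: eq_bigr => j _; ring.
Qed.

End Helpers.
Unset Implicit Arguments.

Theorem mainTheorem6 (R : rcfType) (n m q r : nat)
  (Ustar : 'M[R]_(n, r)) (sig : 'rV[R]_r) (Bstar : 'M[R]_(r, q))
  (a : 'I_m -> 'I_q -> 'cV[R]_n) (c chat : 'I_m -> 'I_q -> R)
  (B : 'M[R]_(r, q)) (Uhat Uplus : 'M[R]_(n, r)) (RU : 'M[R]_r)
  (t1 t2 t3 smin : R) :
  (0 < r)%N ->
  (* reduced SVD X* = U* Sigma* B* *)
  orthonormal_cols Ustar ->
  (forall j, 0 < sig 0 j) ->
  (forall i j : 'I_r, (i <= j)%N -> sig 0 j <= sig 0 i) ->
  orthonormal_rows Bstar ->
  let Btil := diag_mx sig *m Bstar in
  let xs := fun k : 'I_q => Ustar *m col k Btil in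
  let y := fun i k => `|dotv (a i k) (xs k)| in
  (forall i k, c i k = 1 \/ c i k = -1) ->
  (forall i k, y i k = c i k * dotv (a i k) (xs k)) ->
  (* B with orthonormal rows, arbitrary signs chat *)
  orthonormal_rows B ->
  (forall i k, chat i k = 1 \/ chat i k = -1) ->
  (* Uhat minimizes the least-squares loss *)
  let loss := fun Ut : 'M[R]_(n, r) =>
    \sum_(k < q) \sum_(i < m) (chat i k * y i k - dotv (a i k) (Ut *m col k B)) ^+ 2 in
  (forall Ut, loss Uhat <= loss Ut) ->
  (* QR decomposition Uhat = U+ R_U *)
  Uhat = Uplus *m RU ->
  orthonormal_cols Uplus ->
  (forall i j : 'I_r, (j < i)%N -> RU i j = 0) ->
  let SW := fun W : 'M[R]_(n, r) => frob W = 1 in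
  let Term1 := fun W : 'M[R]_(n, r) =>
    \sum_(i < m) \sum_(k < q)
      ((col k B)^T *m W^T *m a i k *m (a i k)^T *m Ustar
         *m (Btil *m B^T *m col k B - col k Btil)) 0 0 in
  let Term2 := fun W : 'M[R]_(n, r) =>
    \sum_(i < m) \sum_(k < q)
      (c i k * chat i k - 1) * dotv (a i k) (W *m col k B) * dotv (a i k) (xs k) in
  let Term3 := fun W : 'M[R]_(n, r) =>
    \sum_(i < m) \sum_(k < q) dotv (a i k) (W *m col k B) ^+ 2 in
  is_max_on SW (fun W => `|Term1 W|) t1 ->
  is_max_on SW (fun W => `|Term2 W|) t2 ->
  is_min_on SW Term3 t3 ->
  let MainTerm := (t1 + t2) / t3 in
  0 < t3 ->
  is_sigma_min (Ustar *m diag_mx sig *m Bstar *m B^T) smin ->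
  MainTerm < smin ->
  SE_le Uplus Ustar (MainTerm / (smin - MainTerm)).
Proof.
move=> r0 HUs Hsig Hsigm HBs Btil xs y Hc Hy HB Hch loss Hmin HQR HUp HRU SW
  Term1 Term2 Term3 [[W1 SW1 eq1] Hmax1] [[W2 SW2 eq2] Hmax2] [_ Hmin3] MT t3pos
  [U0 [V [d [HU0 [HV [Hd0 [Hdm [HG [i0 Hi0 Hs]]]]]]]]] HMT.
set G := Ustar *m diag_mx sig *m Bstar *m B^T.
set E := Uhat - G.
set e := fun k i => dotv (a i k) (E *m col k B).
set g := fun k i => dotv (a i k) (G *m col k B).
set f := fun k i => chat i k * y i k - g k i.
set Aq := \sum_k \sum_i f k i ^+ 2.
set Fq := \sum_k \sum_i f k i * e k i.
set Qq := \sum_k \sum_i e k i ^+ 2.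
have lossE : forall s, loss (G + s *: E) = Aq + (- (2 * s)) * Fq + s ^+ 2 * Qq.
  move=> s; rewrite /Aq /Fq /Qq -dsum_quad /loss.
  apply: eq_bigr => k _; apply: eq_bigr => i _.
  by rewrite mulmxDl -scalemxAl dotv_lin /f /e /g opprD addrA.
have HQF : Qq <= Fq.
  apply: (quad_le (A := Aq)).
    by apply: sumr_ge0 => k _; apply: sumr_ge0 => i _; apply: sqr_ge0.
  move=> s; have := Hmin (G + s *: E).
  have UE : Uhat = G + 1 *: E by rewrite scale1r /E addrC subrK.
  rewrite {1}UE !lossE. lra.
set h := fun i k => dotv (a i k) (Ustar *m (Btil *m B^T *m col k B - col k Btil)).
have T1E : forall W, Term1 W = \sum_i \sum_k dotv (a i k) (W *m col k B) * h i k.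
  move=> W; apply: eq_bigr => i _; apply: eq_bigr => k _.
  rewrite /h.
  have -> : (col k B)^T *m W^T *m a i k *m (a i k)^T *m Ustar
         *m (Btil *m B^T *m col k B - col k Btil) =
      ((W *m col k B)^T *m a i k) *m ((a i k)^T *m (Ustar *m (Btil *m B^T *m col k B - col k Btil))).
    by rewrite trmx_mul !mulmxA.
  by rewrite mx11_mul -dotvE' -dotvE.
have hval : forall i k, h i k = g k i - dotv (a i k) (xs k).
  move=> i k; rewrite /h mulmxBr dotvB /g /xs /G /Btil.
  by rewrite !mulmxA.
have FqE : Fq = Term2 E - Term1 E.
  rewrite /Term2 T1E -sumrB /Fq exchange_big /=; apply: eq_bigr => i _.
  rewrite -sumrB; apply: eq_bigr => k _; rewrite hval /f /e Hy; ring.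
have QqE : Qq = Term3 E by rewrite /Qq exchange_big.
have T1Z : forall s W, Term1 (s *: W) = s * Term1 W.
  move=> s0 W; rewrite !T1E mulr_sumr; apply: eq_bigr => i _; rewrite mulr_sumr.
  by apply: eq_bigr => k _; rewrite -scalemxAl dotvZ mulrA.
have T2Z : forall s W, Term2 (s *: W) = s * Term2 W.
  move=> s0 W; rewrite /Term2 mulr_sumr; apply: eq_bigr => i _; rewrite mulr_sumr.
  by apply: eq_bigr => k _; rewrite -scalemxAl dotvZ; ring.
have T3Z : forall s W, Term3 (s *: W) = s ^+ 2 * Term3 W.
  move=> s0 W; rewrite /Term3 mulr_sumr; apply: eq_bigr => i _; rewrite mulr_sumr.
  by apply: eq_bigr => k _; rewrite -scalemxAl dotvZ exprMn.
have t1ge0 : 0 <= t1 by rewrite -eq1 normr_ge0.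
have t2ge0 : 0 <= t2 by rewrite -eq2 normr_ge0.
have MT0 : 0 <= MT by rewrite /MT divr_ge0 // ?addr_ge0 // ltW.
set S := \sum_i \sum_j E i j ^+ 2.
have S0 : 0 <= S by apply: sumr_ge0 => i _; apply: sumr_ge0 => j _; apply: sqr_ge0.
set rho := Num.sqrt S.
have rho0 : 0 <= rho by apply: sqrtr_ge0.
have rho2 : rho ^+ 2 = S by rewrite sqr_sqrtr.
have hrho : rho <= MT.
  have [rz|rnz] := eqVneq rho 0; first by rewrite rz.
  have rp : 0 < rho by rewrite lt_def rnz rho0.
  set W := rho^-1 *: E.
  have SWW : SW W.
    rewrite /SW /frob.
    have -> : \sum_i \sum_j W i j ^+ 2 = rho^-1 ^+ 2 * S.
      rewrite /S mulr_sumr; apply: eq_bigr => i _; rewrite mulr_sumr.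
      by apply: eq_bigr => j _; rewrite mxE exprMn.
    by rewrite -rho2 -exprMn mulVf // expr1n sqrtr1.
  have EW : E = rho *: W by rewrite /W scalerA mulfV // scale1r.
  have h3 := Hmin3 W SWW.
  have h1 := Hmax1 W SWW.
  have h2 := Hmax2 W SWW.
  have := HQF; rewrite FqE QqE EW T1Z T2Z T3Z => hq.
  have a1 := ler_norm (Term2 W).
  have a2 : - Term1 W <= `|Term1 W| by rewrite -normrN ler_norm.
  have hb : rho ^+ 2 * t3 <= rho * (t1 + t2).
    have e1 : rho ^+ 2 * t3 <= rho ^+ 2 * Term3 W by apply: ler_wpM2l => //; apply: sqr_ge0.
    have e2 : rho * (Term2 W - Term1 W) <= rho * (t1 + t2).
      apply: ler_wpM2l => //.
      lra.
    lra.
  have hb2 : rho * t3 <= t1 + t2.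
    have : rho * (rho * t3 - (t1 + t2)) <= 0 by rewrite mulrBr mulrA -expr2; lra.
    by rewrite pmulr_rle0 // subr_le0.
  by rewrite /MT ler_pdivlMr.
have hsmin : forall i, smin <= d 0 i.
  move=> i; rewrite Hs; apply: Hdm.
  have hi := ltn_ord i; have hj : nat_of_ord i0 = r.-1 := Hi0; lia.
have smin0 : 0 <= smin by rewrite Hs.
have sminp : 0 < smin by apply: le_lt_trans HMT.
set M := diag_mx sig *m Bstar *m B^T.
have GM : G = Ustar *m M by rewrite /G /M !mulmxA.
have low : forall w, smin ^+ 2 * nsq w <= nsq (M *m w).
  move=> w; rewrite -(nsq_orth (M *m w) HUs) mulmxA -GM /G HG; exact: svd_lower.
have sp2 : 0 < smin ^+ 2 by rewrite exprn_gt0.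
have Munit : M \in unitmx.
  rewrite unitmxE unitfE -det_tr; apply/negP => /det0P [v vnz vM].
  have MvT : M *m v^T = 0 by rewrite -[M]trmxK -trmx_mul vM trmx0.
  have := low v^T; rewrite MvT nsq0 => hl.
  have : nsq v^T = 0.
    by apply/eqP; rewrite eq_le nsq_ge0 andbT -(pmulr_rle0 _ sp2).
  by move/nsq_eq0/eqP; rewrite trmx_eq0 (negbTE vnz).
rewrite /SE_le /opnorm_le => v vn1.
have nv : nsq v = 1.
  have : Num.sqrt (nsq v) = 1 := vn1.
  by move/(congr1 (fun x => x ^+ 2)); rewrite /= sqr_sqrtr ?nsq_ge0 // expr1n.
set w := invmx M *m v.
have Mw : M *m w = v by rewrite /w mulKVmx.
have hw : smin ^+ 2 * nsq w <= 1 by rewrite -nv -Mw; exact: low.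
have P0 : (1%:M - Uplus *m Uplus^T) *m Uhat = 0.
  by rewrite HQR mulmxA mulmxBl mul1mx -(mulmxA Uplus Uplus^T Uplus) HUp mulmx1 subrr mul0mx.
have GE : G = Uhat - E by rewrite /E opprB addrC subrK.
have tgt : (1%:M - Uplus *m Uplus^T) *m Ustar *m v
    = - ((1%:M - Uplus *m Uplus^T) *m (E *m w)).
  rewrite -Mw -mulmxA (mulmxA Ustar) -GM GE (mulmxBl Uhat E w) mulmxBr (mulmxA _ Uhat) P0 mul0mx.
  by rewrite sub0r.
set N := nsq ((1%:M - Uplus *m Uplus^T) *m Ustar *m v).
have hN : N <= rho ^+ 2 * nsq w.
  rewrite /N tgt nsqN rho2; apply: le_trans (nsq_proj _ HUp) _; exact: nsq_mul_le.
have N0 : 0 <= N by apply: nsq_ge0.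
have w0 : 0 <= nsq w by apply: nsq_ge0.
set b := MT / (smin - MT).
have Dp : 0 < smin - MT by rewrite subr_gt0.
have bD : b * (smin - MT) = MT by rewrite /b divfK // gt_eqF.
have b0 : 0 <= b by rewrite /b divr_ge0 // ltW.
have hN2 : N <= b ^+ 2.
  have s1 : smin ^+ 2 * N <= rho ^+ 2.
    have : smin ^+ 2 * N <= smin ^+ 2 * (rho ^+ 2 * nsq w) by apply: ler_wpM2l => //; apply: ltW.
    have : rho ^+ 2 * (smin ^+ 2 * nsq w) <= rho ^+ 2 * 1 by apply: ler_wpM2l => //; apply: sqr_ge0.
    have -> : smin ^+ 2 * (rho ^+ 2 * nsq w) = rho ^+ 2 * (smin ^+ 2 * nsq w) by ring.
    rewrite mulr1; lra.
  have s2 : rho ^+ 2 <= MT ^+ 2 by rewrite ler_sqr ?nnegrE.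
  have s3 : (smin - MT) ^+ 2 * N <= smin ^+ 2 * N.
    apply: ler_wpM2r => //; rewrite ler_sqr ?nnegrE; lra.
  have s4 : (smin - MT) ^+ 2 * (N - b ^+ 2) <= 0.
    have -> : (smin - MT) ^+ 2 * (N - b ^+ 2) = (smin - MT) ^+ 2 * N - (b * (smin - MT)) ^+ 2 by ring.
    rewrite bD.
    lra.
  have : N - b ^+ 2 <= 0 by rewrite -(pmulr_rle0 _ (exprn_gt0 2 Dp)).
  lra.
rewrite /vnorm -/(nsq _) -/N.
by apply: le_trans (ler_wsqrtr hN2) _; rewrite sqrtr_sqr ger0_norm.
Qed.
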